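(* Define integers $Q(n)$ by $Q(0)=0$, $Q(1)=1$ and $Q(n)=b(n)Q(n-1)+Q(n-2)$ for $n\ge2$, where $b(n)=2n/3$ if $3\mid n$ and $b(n)=1$ if $3\nmid n$. Let $n>1$ be an integer and let $N$ be the unique integer with $3N\le n<3(N+1)$. If $m$ is a positive integer with $Q(n)\le m!$, then $N<m$ and $n<3m$.
   Context: $Q(n)$ is the denominator of the $n$th convergent of the simple continued fraction $e=[2,1,2,1,1,4,1,1,6,\dots]$; its first values are $0,1,1,3,4,7,32,39,71,465,\dots$. *)

(* Defs.v *)
From mathcomp Require Import all_boot.

Definition b (n : nat) : nat := if 3 %| n then (2 * n) %/ 3 else 1.

(* Pair (Q n, Q n.+1) computed by the recurrence Q(n+2) = b(n+2) Q(n+1) + Q(n). *)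
Fixpoint Qpair (n : nat) : nat * nat :=
  match n with
  | 0 => (0, 1)
  | k.+1 => let: (a, c) := Qpair k in (c, b k.+2 * c + a)
  end.

Definition Q (n : nat) : nat := (Qpair n).1.

Lemma Q0 : Q 0 = 0. Proof. by []. Qed.
Lemma Q1 : Q 1 = 1. Proof. by []. Qed.
Lemma QS (n : nat) : Q n.+2 = b n.+2 * Q n.+1 + Q n.
Proof. rewrite /Q /=; by case: (Qpair n). Qed.

(* Main.v *)
Require Import Defs.
From mathcomp Require Import all_boot.
From mathcomp Require Import zify.

Lemma b_ge1 n : 0 < n -> 0 < b n.
Proof.
rewrite /b; case: ifP => // /dvdnP [k ->] Hn.
rewrite mulnA mulnK //; lia.
Qed.

Lemma Qmono k : Q k <= Q k.+1.
Proof.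
case: k => [|k] //; rewrite QS.
have := b_ge1 (k.+2) isT; nia.
Qed.

Lemma Qmono2 i j : i <= j -> Q i <= Q j.
Proof.
move=> /subnKC <-; elim: (j - i) => [|d IH]; first by rewrite addn0.
rewrite addnS; exact: leq_trans IH (Qmono _).
Qed.

Lemma factmono i j : i <= j -> i`! <= j`!.
Proof.
move=> /subnKC <-; elim: (j - i) => [|d IH]; first by rewrite addn0.
rewrite addnS factS; have := fact_gt0 (i + d); nia.
Qed.

Lemma Q3 N : 2 * N.+1`! <= Q (3 * N.+1).
Proof.
elim: N => [|N IH]; first by [].
have -> : 3 * N.+2 = (3 * N + 4).+2 by lia.
rewrite QS.
have -> : b (3 * N + 4).+2 = 2 * N.+2.
  rewrite /b. have -> : (3 * N + 4).+2 = 3 * N.+2 by lia.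
  rewrite dvdn_mulr // mulnCA mulKn //.
have H : Q (3 * N.+1) <= Q (3 * N + 4).+1 by apply: Qmono2; lia.
rewrite factS; nia.
Qed.

Theorem lemmaA3 (n N m : nat) :
  1 < n -> 3 * N <= n < 3 * N.+1 -> 0 < m -> Q n <= m`! ->
  N < m /\ n < 3 * m.
Proof.
move=> Hn /andP [H1 H2] Hm HQ.
suff HN : N < m by split => //; lia.
rewrite ltnNge; apply/negP => HmN.
case: N H1 H2 HmN => [|N] H1 H2 HmN; first by lia.
have A := Q3 N.
have B : Q (3 * N.+1) <= Q n by apply: Qmono2.
have C := factmono _ _ HmN.
have D := fact_gt0 m.
lia.
Qed.
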